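(* Let $r\ne0$ be an integer, $K$ a field of characteristic not dividing $2r$, and $E_r$ the elliptic curve $y^2=x^3-r^{-1}x$, embedded in $\mathbb{P}^2$ as $x^3-rxz^2-ry^2z=0$, the affine point $(x,y)$ corresponding to $(x:y:r^{-1})$ and $O=(0:1:0)$. Let $Q=(a,b)$ be an affine $3$-torsion point of $E_r$, and let $A\in\mathrm{GL}_3(K)$ be such that the projective transformation $\bar A$ of $\mathbb{P}^2$ (acting on column vectors of homogeneous coordinates $(x,y,z)^{\mathrm T}$) maps $E_r$ into itself and restricts to the translation $\tau_Q:P\mapsto P+Q$ on $E_r$. Then there exists $\nu\in K^\times$ such that, up to multiplication by a nonzero scalar, $$A=\begin{pmatrix} rab+2ab\nu & ra^2 & -2ra^2b\nu\\ (-3r-2\nu)b^2 & rab & 2rab^2\nu\\ (1-2\nu a^2)b & a & 2ra^3b\nu\end{pmatrix}.$$ *)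

(* Defs.v *)
From HB Require Import structures.
From mathcomp Require Import all_boot all_order all_algebra.
Set Implicit Arguments. Unset Strict Implicit. Unset Printing Implicit Defensive.
Import Order.TTheory GRing.Theory Num.Theory.
Local Open Scope ring_scope.

(* Points of the Weierstrass curve  y^2 = x^3 + alpha x  over a field L:
   None is the point at infinity O, Some (x, y) an affine point. *)
Definition ec_on (L : fieldType) (alpha : L) (P : option (L * L)) : bool :=
  match P with
  | None => true
  | Some (x, y) => y ^+ 2 == x ^+ 3 + alpha * x
  end.

(* Chord-and-tangent group law (char L <> 2), neutral element O = None. *)
Definition ec_add (L : fieldType) (alpha : L) (P Q : option (L * L)) :
    option (L * L) :=
  match P, Q with
  | None, _ => Q
  | _, None => P
  | Some (x1, y1), Some (x2, y2) =>
      if x1 == x2 then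
        if y1 == - y2 then None
        else
          let l := (3%:R * x1 ^+ 2 + alpha) / (2%:R * y1) in
          let x3 := l ^+ 2 - x1 - x2 in
          Some (x3, l * (x1 - x3) - y1)
      else
        let l := (y2 - y1) / (x2 - x1) in
        let x3 := l ^+ 2 - x1 - x2 in
        Some (x3, l * (x1 - x3) - y1)
  end.

Definition alpha_r (L : fieldType) (r : int) : L := - (r%:~R)^-1.

(* Homogeneous coordinates (column vector) of a point of E_r in P^2 for the
   model x^3 - r x z^2 - r y^2 z = 0: (x,y) |-> (x : y : r^{-1}), O |-> (0:1:0). *)
Definition coords (L : fieldType) (r : int) (P : option (L * L)) : 'cV[L]_3 :=
  match P with
  | None => \col_(i < 3) (if i == 1 :> nat then 1 else 0)
  | Some (x, y) => \col_(i < 3) nth 0 [:: x; y; (r%:~R)^-1] i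
  end.

Definition proj_eq (L : fieldType) (v w : 'cV[L]_3) : Prop :=
  exists c : L, c != 0 /\ v = c *: w.

Definition mx3 (K : fieldType) (a11 a12 a13 a21 a22 a23 a31 a32 a33 : K)
  : 'M[K]_3 :=
  \matrix_(i < 3, j < 3)
     nth 0 (nth [::] [:: [:: a11; a12; a13]; [:: a21; a22; a23];
                         [:: a31; a32; a33]] i) j.

Definition Amat (K : fieldType) (r : int) (a b nu : K) : 'M[K]_3 :=
  let R : K := r%:~R in
  mx3 (R * a * b + 2%:R * a * b * nu) (R * a ^+ 2) (- (2%:R * R * a ^+ 2 * b * nu))
      ((- (3%:R * R) - 2%:R * nu) * b ^+ 2) (R * a * b) (2%:R * R * a * b ^+ 2 * nu)
      ((1 - 2%:R * nu * a ^+ 2) * b) a (2%:R * R * a ^+ 3 * b * nu).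

(* Main.v *)
Require Import Defs.
From HB Require Import structures.
From mathcomp Require Import all_boot all_order all_algebra.
From mathcomp Require Import ring.
Import GRing.Theory Num.Theory.
Set Implicit Arguments. Unset Strict Implicit.
Local Open Scope ring_scope.

Definition col3 (K : fieldType) (x y z : K) : 'cV[K]_3 := \col_(i < 3) nth 0 [:: x; y; z] i.

Lemma mx3E (K : fieldType) (A : 'M[K]_3) :
  A = mx3 (A ord0 ord0) (A ord0 (lift ord0 ord0)) (A ord0 ord_max)
          (A (lift ord0 ord0) ord0) (A (lift ord0 ord0) (lift ord0 ord0)) (A (lift ord0 ord0) ord_max)
          (A ord_max ord0) (A ord_max (lift ord0 ord0)) (A ord_max ord_max).
Proof.
apply/matrixP => i j; rewrite mxE.
by case: i j => [[|[|[|?]]] ?] [[|[|[|?]]] ?] //=; congr (A _ _); apply: val_inj.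
Qed.

Lemma mul_mx3 (K : fieldType) m11 m12 m13 m21 m22 m23 m31 m32 m33 (x y z : K) :
  mx3 m11 m12 m13 m21 m22 m23 m31 m32 m33 *m col3 x y z =
  col3 (m11 * x + m12 * y + m13 * z) (m21 * x + m22 * y + m23 * z) (m31 * x + m32 * y + m33 * z).
Proof.
apply/matrixP => i j; rewrite !mxE !big_ord_recl big_ord0 addr0 !mxE addrA.
by case: i => [[|[|[|?]]] ?].
Qed.

Lemma scale_col3 (K : fieldType) (c x y z : K) : c *: col3 x y z = col3 (c * x) (c * y) (c * z).
Proof. by apply/matrixP => i j; rewrite !mxE; case: i => [[|[|[|?]]] ?]. Qed.

Lemma scale_mx3 (K : fieldType) (c : K) m11 m12 m13 m21 m22 m23 m31 m32 m33 :
  c *: mx3 m11 m12 m13 m21 m22 m23 m31 m32 m33 =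
  mx3 (c * m11) (c * m12) (c * m13) (c * m21) (c * m22) (c * m23) (c * m31) (c * m32) (c * m33).
Proof. by apply/matrixP => i j; rewrite !mxE; case: i j => [[|[|[|?]]] ?] [[|[|[|?]]] ?]. Qed.

Lemma col3_inj (K : fieldType) (x y z x' y' z' : K) :
  col3 x y z = col3 x' y' z' -> [/\ x = x', y = y' & z = z'].
Proof.
move=> E; have e := fun i => congr1 (fun M : 'cV[K]_3 => M i 0) E.
by move: (e ord0) (e (lift ord0 ord0)) (e ord_max); rewrite !mxE.
Qed.

Lemma coordsN (K : fieldType) r : coords r (@None (K * K)%type) = col3 0 1 0.
Proof. by apply/matrixP => i j; rewrite !mxE; case: i => [[|[|[|?]]] ?]. Qed.

Lemma coordsS (K : fieldType) r (x y : K) : coords r (Some (x, y)) = col3 x y (r%:~R)^-1.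
Proof. by []. Qed.


Lemma solve_by (K : fieldType) (x y k l r : K) : l = r -> x - y = k * (l - r) -> x = y.
Proof. by move=> -> /eqP; rewrite subrr mulr0 subr_eq0 => /eqP. Qed.

Lemma solve_by2 (K : fieldType) (x y k1 l1 r1 k2 l2 r2 : K) : l1 = r1 -> l2 = r2 ->
  x - y = k1 * (l1 - r1) + k2 * (l2 - r2) -> x = y.
Proof. by move=> -> -> /eqP; rewrite !subrr !mulr0 addr0 subr_eq0 => /eqP. Qed.

Lemma torsion (K : fieldType) (s a b : K) : s != 0 -> (2:K) != 0 ->
  b ^+ 2 = a ^+ 3 + - s * a ->
  ec_add (- s) (ec_add (- s) (Some (a, b)) (Some (a, b))) (Some (a, b)) = None ->
  [/\ a != 0, b != 0 & a ^+ 2 + s != 0].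
Proof.
move=> hs h2 hon H3.
rewrite /ec_add eqxx in H3.
case: eqP H3 => [//|hb] /=.
have hb0 : b != 0 by apply/eqP => b0; apply: hb; rewrite b0 oppr0.
case: eqP => [hx _|//].
have ha0 : a != 0.
  apply: contraTneq hs => a0; rewrite a0 in hx.
  have : s ^+ 2 = 0.
    apply: (solve_by (k := 4 * b ^+ 2) hx); field.
    by rewrite hb0 h2.
  by move/eqP; rewrite expf_eq0 /= negbK.
split => //; apply/eqP => es.
have es' : s = - a ^+ 2 by apply/eqP; rewrite -addr_eq0 addrC es.
rewrite es' opprK in hx hon.
have : 8 * a ^+ 4 = 0.
  apply: (solve_by2 (k1 := - 4 * b ^+ 2) (k2 := - 12 * a) hx hon); field.
  by rewrite hb0 h2.
move/eqP; rewrite mulf_eq0 expf_eq0 (negbTE ha0) orbF /=.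
have -> : (8 : K) = 2 * 2 * 2 by ring.
by rewrite !mulf_eq0 (negbTE h2).
Qed.

Lemma addTQ (K : fieldType) (s a b : K) : a != 0 -> b ^+ 2 = a ^+ 3 + - s * a ->
  ec_add (- s) (Some (0, 0)) (Some (a, b)) = Some (- (s / a), b * s / a ^+ 2).
Proof.
move=> ha hon; rewrite /ec_add eq_sym (negbTE ha); congr (Some (_, _)).
  by apply: (solve_by (k := a ^-2) hon); field.
by apply: (solve_by (k := - b / a ^+ 3) hon); field.
Qed.

Lemma addTmQ (K : fieldType) (s a b : K) : a != 0 -> a ^+ 2 + s != 0 -> b ^+ 2 = a ^+ 3 + - s * a ->
  ec_add (- s) (Some (- (s / a), - (b * s / a ^+ 2))) (Some (a, b)) = Some (0, 0).
Proof.
move=> ha has hon; rewrite /ec_add.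
have -> : (- (s / a) == a) = false.
  apply/negbTE; apply: contra has => /eqP e.
  by apply/eqP; apply: (solve_by (k := - a) e); field.
congr (Some (_, _)).
  by apply: (solve_by (k := a ^-2) hon); field; rewrite ha /= opprK -expr2.
by apply: (solve_by (k := - b / a ^+ 3) hon); field; rewrite ha /= opprK -expr2.
Qed.

Lemma onTmQ (K : fieldType) (s a b : K) : a != 0 -> b ^+ 2 = a ^+ 3 + - s * a ->
  ec_on (- s) (Some (- (s / a), - (b * s / a ^+ 2))).
Proof.
move=> ha hon; apply/eqP.
by apply: (solve_by (k := s ^+ 2 / a ^+ 4) hon); field.
Qed.

Unset Implicit Arguments.
Set Strict Implicit.

Theorem lemma3p9 (K : fieldType) (r : int) (a b : K) (A : 'M[K]_3) :
  r != 0 ->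
  ((2 * r)%:~R : K) != 0 ->
  ec_on (alpha_r K r) (Some (a, b)) ->
  ec_add (alpha_r K r) (ec_add (alpha_r K r) (Some (a, b)) (Some (a, b)))
         (Some (a, b)) = None ->
  A \in unitmx ->
  (forall (L : fieldType) (f : {rmorphism K -> L}) (P : option (L * L)),
      ec_on (alpha_r L r) P ->
      proj_eq (map_mx f A *m coords r P)
              (coords r (ec_add (alpha_r L r) P (Some (f a, f b))))) ->
  exists nu : K, nu != 0 /\
    exists c : K, c != 0 /\ A = c *: Amat r a b nu.
Proof.
move=> _ h2r Hon H3 _ Htr.
move: (Htr K idfun) => {Htr}; rewrite map_mx_id // /alpha_r /= => Htr.
move: h2r Hon H3 Htr; rewrite /Amat /alpha_r.
rewrite intrM mulf_eq0 negb_or => /andP[h2 hR].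
set R := (r%:~R : K).
have hs : R^-1 != 0 by rewrite invr_eq0.
have eR : R = R^-1^-1 by rewrite invrK.
set s := R^-1 in hs eR *.
move=> /eqP hon H3 Htr.
move: Htr; rewrite [A]mx3E.
move: (A ord0 ord0 : K) (A ord0 (lift ord0 ord0) : K) (A ord0 ord_max : K)
  (A (lift ord0 ord0) ord0 : K) (A (lift ord0 ord0) (lift ord0 ord0) : K) (A (lift ord0 ord0) ord_max : K)
  (A ord_max ord0 : K) (A ord_max (lift ord0 ord0) : K) (A ord_max ord_max : K).
move=> m11 m12 m13 m21 m22 m23 m31 m32 m33 Htr.
have [ha hb has] := torsion hs h2 hon H3.
have := Htr None isT; rewrite coordsN [ec_add _ _ _]/= coordsS -/R -/s.
case=> c1 [hc1]; rewrite mul_mx3 scale_col3 => /col3_inj [O1 O2 O3].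
have onmQ : ec_on (- s) (Some (a, - b)) by rewrite /= sqrrN hon.
have := Htr _ onmQ; rewrite [ec_add _ _ _]/= !eqxx coordsN coordsS -/R -/s.
case=> c2 [hc2]; rewrite mul_mx3 scale_col3 => /col3_inj [Q1 Q2 Q3].
have onT : ec_on (- s) (Some (0, 0)) by apply/eqP; ring.
have := Htr _ onT; rewrite addTQ // !coordsS -/R -/s.
case=> c3 [hc3]; rewrite mul_mx3 scale_col3 => /col3_inj [T1 T2 T3].
have := Htr _ (onTmQ ha hon); rewrite addTmQ // !coordsS -/R -/s.
case=> c4 [hc4]; rewrite mul_mx3 scale_col3 => /col3_inj [U1 U2 U3].
rewrite eR; clearbody s; clear Htr H3 onmQ onT.
have h2' : (2 : K) != 0 by [].
have has' : s + a ^+ 2 != 0 by rewrite addrC.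
have e12 : m12 = c1 * a by rewrite -O1; ring.
have e22 : m22 = c1 * b by rewrite -O2; ring.
have e32 : m32 = c1 * s by rewrite -O3; ring.
have e13 : m13 = - c3 / a by apply: (solve_by (k := s^-1) T1); field; rewrite ha hs.
have e23 : m23 = c3 * b / a ^+ 2 by apply: (solve_by (k := s^-1) T2); field; rewrite ha hs.
have e33 : m33 = c3 by apply: (solve_by (k := s^-1) T3); field.
have e11 : m11 = (b * m12 - s * m13) / a by apply: (solve_by (k := a^-1) Q1); field.
have e31 : m31 = (b * m32 - s * m33) / a by apply: (solve_by (k := a^-1) Q3); field.
have e21 : m21 = a * m23 - b * m22 / a by apply: (solve_by (k := - a / s) U2); field; rewrite ha hs.
rewrite e12 e13 in e11 U1; rewrite e22 e23 in e21; rewrite e32 e33 in e31.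
rewrite e11 in U1.
have ec3 : c3 = - 2 * a ^+ 2 * b * c1 / (s + a ^+ 2).
  apply: (solve_by (k := - a ^+ 3 / (s * (s + a ^+ 2))) U1); field.
  by rewrite ha hs has' .
exists (- (s + a ^+ 2)^-1); split; first by rewrite oppr_eq0 invr_eq0.
exists (c1 * s / a); split; first by rewrite !mulf_neq0 ?invr_eq0.
rewrite scale_mx3 e11 e12 e13 e21 e22 e23 e31 e32 e33 ec3.
congr mx3; field; rewrite ?ha ?hs ?has' //.
Qed.
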